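(* For any $x\in\mathbb{R}^n$, $\frac{\mu_1}{2}d(x,P)^2\le f(x)\le\frac{\mu_2}{2}d(x,P)^2$, where $0<\mu_1=\frac{1}{mL^2}\le\mu_2=\min\{1,\frac{\beta}{m}\lambda_{\max}(A^TA)\}\le1$.
   Context: Let $A\in\mathbb{R}^{m\times n}$ have rows $a_1^T,\dots,a_m^T$ with $\|a_i\|_2=1$, and $b\in\mathbb{R}^m$; assume $Ax\le b$ is consistent and let $P=\{x:Ax\le b\}$, $\mathcal{P}(x)$ the Euclidean projection onto $P$, $d(x,P)=\|x-\mathcal{P}(x)\|$, $t^+=\max\{t,0\}$ (entrywise on vectors). Fix an integer $1\le\beta\le m$. Sampling distribution $\mathbb{S}$ at $x$: $\tau\subseteq\{1,\dots,m\}$ with $|\tau|=\beta$ uniformly at random among all $\binom m\beta$ subsets, and $i^*\in\tau$ maximizing $(a_i^Tx-b_i)^+$ over $\tau$; $\mathbb{E}_{\mathbb{S}}$ is expectation over $\tau$. $f(x)=\mathbb{E}_{\mathbb{S}}[\frac12|(a_{i^*}^Tx-b_{i^*})^+|^2]$. $L>0$ is a Hoffman constant: $d(x,P)^2\le L^2\|(Ax-b)^+\|^2$ for all $x$. *)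

(* Defs.v *)
From mathcomp Require Import all_boot all_order all_algebra.
From mathcomp Require Import classical_sets reals.
Set Implicit Arguments. Unset Strict Implicit. Unset Printing Implicit Defensive.
Import Order.TTheory GRing.Theory Num.Theory.
Local Open Scope ring_scope.
Local Open Scope classical_set_scope.

Section Defs.
Variable R : realType.

Definition enorm (k : nat) (v : 'cV[R]_k) : R := Num.sqrt (\sum_i v i 0 ^+ 2).

Definition pos (t : R) : R := Num.max t 0.
Definition posv (k : nat) (v : 'cV[R]_k) : 'cV[R]_k := \col_i pos (v i 0).

Definition polyh (m n : nat) (A : 'M[R]_(m, n)) (b : 'cV[R]_m) : set 'cV[R]_n :=
  [set x | forall i, (A *m x) i 0 <= b i 0].

Definition dist_set (n : nat) (x : 'cV[R]_n) (S : set 'cV[R]_n) : R :=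
  inf [set enorm (x - y) | y in S].

Definition lambda_max (n : nat) (M : 'M[R]_n) : R :=
  sup [set a | eigenvalue M a].

Definition resid (m n : nat) (A : 'M[R]_(m, n)) (b : 'cV[R]_m) (x : 'cV[R]_n)
  (i : 'I_m) : R := pos ((A *m x) i 0 - b i 0).

(* f(x) = E_tau [ 1/2 |(a_{i*}^T x - b_{i*})^+|^2 ], tau uniform among the
   subsets of size beta, i* maximizing the residual over tau; the value of the
   residual at i* is the maximum over tau of the residuals. *)
Definition fobj (m n : nat) (beta : nat) (A : 'M[R]_(m, n)) (b : 'cV[R]_m)
  (x : 'cV[R]_n) : R :=
  ('C(m, beta)%:R)^-1 *
  \sum_(tau : {set 'I_m} | #|tau| == beta)
     (2^-1 * (\big[Num.max/0]_(i in tau) resid A b x i) ^+ 2).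

End Defs.

(* Main.v *)
Require Import Defs.
From mathcomp Require Import all_boot all_order all_algebra.
From mathcomp Require Import classical_sets reals.
From mathcomp Require Import ring lra.
Import Order.TTheory GRing.Theory Num.Theory.
Local Open Scope ring_scope.
Set Implicit Arguments. Unset Strict Implicit.

Section H.
Variable R : realType.

Definition nz (k : nat) (v : 'cV[R]_k) : R := \sum_i v i 0 ^+ 2.

Lemma nz_ge0 k (v : 'cV[R]_k) : 0 <= nz v.
Proof. by apply: sumr_ge0 => i _; rewrite sqr_ge0. Qed.

Lemma enorm_sq k (v : 'cV[R]_k) : enorm v ^+ 2 = nz v.
Proof. by rewrite /enorm sqr_sqrtr // nz_ge0. Qed.

Lemma enorm_ge0 k (v : 'cV[R]_k) : 0 <= enorm v.
Proof. by rewrite /enorm sqrtr_ge0. Qed.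

Lemma quad (a b c : R) : 0 <= a -> (forall t, 0 <= a * t ^+ 2 + 2 * b * t + c) ->
  b ^+ 2 <= a * c.
Proof.
move=> a0 H; have c0 := H 0; rewrite expr0n /= !mulr0 !add0r in c0.
have [az|ap] := eqVneq a 0.
  rewrite az mul0r; have [bz|bn] := eqVneq b 0; first by rewrite bz expr0n.
  have := H (- (c + 1) / (2 * b)); rewrite az mul0r add0r.
  have -> : 2 * b * (- (c + 1) / (2 * b)) = - (c + 1) by field.
  lra.
have apos : 0 < a by rewrite lt_def ap a0.
have := H (- b / a).
have -> : a * (- b / a) ^+ 2 = b ^+ 2 / a by field.
have -> : 2 * b * (- b / a) = - 2 * (b ^+ 2 / a) by field.
move=> h.
have : b ^+ 2 / a <= c by lra.
rewrite ler_pdivrMr // => h2; by rewrite mulrC.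
Qed.

Lemma cs_sum k (u w : 'I_k -> R) :
  (\sum_i u i * w i) ^+ 2 <= (\sum_i u i ^+ 2) * (\sum_i w i ^+ 2).
Proof.
apply: quad; first by apply: sumr_ge0 => i _; rewrite sqr_ge0.
move=> t.
have -> : (\sum_i u i ^+ 2) * t ^+ 2 + 2 * (\sum_i u i * w i) * t + \sum_i w i ^+ 2
  = \sum_i (u i * t + w i) ^+ 2.
  rewrite mulr_suml mulr_sumr mulr_suml -!big_split /=.
  by apply: eq_bigr => i _; ring.
by apply: sumr_ge0 => i _; rewrite sqr_ge0.
Qed.

Definition phi k (M : 'M[R]_k) (u v : 'cV[R]_k) : R := (u^T *m M *m v) 0 0.

Lemma phi_sym k (M : 'M[R]_k) u v : M^T = M -> phi M u v = phi M v u.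
Proof.
move=> hM; rewrite /phi.
have e : forall X : 'M[R]_1, X 0 0 = X^T 0 0 by move=> X; rewrite mxE.
by rewrite e trmx_mul trmx_mul trmxK hM mulmxA.
Qed.

Lemma phi_expand k (M : 'M[R]_k) u v t : M^T = M ->
  phi M (t *: v + u) (t *: v + u) = phi M v v * t ^+ 2 + 2 * phi M u v * t + phi M u u.
Proof.
move=> hM; rewrite /phi.
have -> : (t *: v + u)^T = t *: v^T + u^T by apply/matrixP => i j; rewrite !mxE.
rewrite !mulmxDl !mulmxDr.
rewrite -!scalemxAl -!scalemxAr.
have e1 : forall X Y : 'M[R]_1, (X + Y) 0 0 = X 0 0 + Y 0 0 by move=> *; rewrite mxE.
have e2 : forall (a : R) (X : 'M[R]_1), (a *: X) 0 0 = a * X 0 0 by move=> *; rewrite mxE.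
rewrite !e1 !e2.
have := phi_sym u v hM; rewrite /phi => <-.
rewrite -!mulmxA; ring.
Qed.

Lemma psd_cs k (M : 'M[R]_k) u v : M^T = M -> (forall w, 0 <= phi M w w) ->
  phi M u v ^+ 2 <= phi M u u * phi M v v.
Proof.
move=> hM hpsd; rewrite mulrC; apply: quad => // t.
by rewrite -phi_expand.
Qed.

Lemma nz_tr k (w : 'cV[R]_k) : nz w = (w^T *m w) 0 0.
Proof. by rewrite mxE; apply: eq_bigr => i _; rewrite mxE expr2. Qed.

Lemma nzZ k (c : R) (w : 'cV[R]_k) : nz (c *: w) = c ^+ 2 * nz w.
Proof. rewrite /nz mulr_sumr; apply: eq_bigr => i _; rewrite mxE; ring. Qed.

Lemma nzN k (w : 'cV[R]_k) : nz (- w) = nz w.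
Proof. by apply: eq_bigr => i _; rewrite mxE sqrrN. Qed.

Lemma nz_eq0 k (w : 'cV[R]_k) : nz w = 0 -> w = 0.
Proof.
move=> /eqP; rewrite psumr_eq0 => [/allP H|i _]; last by rewrite sqr_ge0.
apply/matrixP => i j; rewrite (ord1 j) mxE.
have := H i (mem_index_enum i); rewrite /= sqrf_eq0 => /eqP //.
Qed.

Lemma phi_delta k (M : 'M[R]_k) j z : phi M (delta_mx j 0) z = (M *m z) j 0.
Proof. by rewrite /phi trmx_delta -mulmxA -rowE mxE. Qed.

Lemma phi_delta2 k (M : 'M[R]_k) j : phi M (delta_mx j 0) (delta_mx j 0) = M j j.
Proof. by rewrite /phi trmx_delta -rowE -colE !mxE. Qed.

Lemma phi_rho m k (A : 'M[R]_(m, k)) (r : R) z :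
  phi (r%:M - A^T *m A) z z = r * nz z - nz (A *m z).
Proof.
rewrite /phi mulmxBr mulmxBl mul_mx_scalar -scalemxAl.
have e1 : forall X Y : 'M[R]_1, (X - Y) 0 0 = X 0 0 - Y 0 0 by move=> *; rewrite !mxE.
have e2 : forall (a : R) (X : 'M[R]_1), (a *: X) 0 0 = a * X 0 0 by move=> *; rewrite mxE.
by rewrite e1 e2 !nz_tr trmx_mul !mulmxA.
Qed.

Lemma nz0 k : nz (0 : 'cV[R]_k) = 0.
Proof. by rewrite /nz big1 // => i _; rewrite mxE expr0n. Qed.

Lemma rayleigh m k (A : 'M[R]_(m, k)) (C : R) : (0 < k)%N ->
  (forall z, nz (A *m z) <= C * nz z) ->
  0 <= lambda_max (A^T *m A) /\
  forall z, nz (A *m z) <= lambda_max (A^T *m A) * nz z.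
Proof.
move=> hk hC.
set B := A^T *m A.
pose E : set R := fun e => exists2 z : 'cV[R]_k, nz z = 1 & nz (A *m z) = e.
pose i0 := Ordinal hk.
pose e0 : 'cV[R]_k := delta_mx i0 0.
have ne0 : nz e0 = 1.
  rewrite /nz (bigD1 i0) //= big1 => [|i /negbTE hi].
    by rewrite !mxE !eqxx /= expr1n addr0.
  by rewrite !mxE hi /= expr0n.
have hsE : has_sup E.
  split; first by exists (nz (A *m e0)), e0.
  by exists C => _ [z hz <-]; rewrite -[C]mulr1 -hz hC.
set rho := sup E.
have hray : forall z, nz (A *m z) <= rho * nz z.
  move=> z; have [z0|zn] := eqVneq (nz z) 0.
    by rewrite (nz_eq0 z0) mulmx0 !nz0 mulr0.
  have zp : 0 < nz z by rewrite lt_def zn nz_ge0.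
  set s := Num.sqrt (nz z).
  have sp : 0 < s by rewrite sqrtr_gt0.
  have ss : s ^+ 2 = nz z by rewrite sqr_sqrtr // nz_ge0.
  have : E (nz (A *m (s^-1 *: z))).
    exists (s^-1 *: z) => //=; rewrite nzZ -ss; field.
    by rewrite gt_eqF.
  move/(sup_upper_bound hsE); rewrite -scalemxAr nzZ -/rho => h.
  have -> : nz (A *m z) = s ^+ 2 * (s^-1 ^+ 2 * nz (A *m z)).
    by field; rewrite gt_eqF.
  by rewrite -ss mulrC ler_wpM2r // sqr_ge0.
have rho0 : 0 <= rho.
  apply: le_trans (nz_ge0 (A *m e0)) _; apply: (sup_upper_bound hsE).
  by exists e0.
have hB : B^T = B by rewrite /B trmx_mul trmxK.
set M := rho%:M - B.
have hMs : M^T = M by rewrite /M linearB /= tr_scalar_mx hB.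
have hpsd : forall w, 0 <= phi M w w by move=> w; rewrite phi_rho subr_ge0 hray.
have eig : eigenvalue B rho.
  rewrite /eigenvalue /eigenspace kermx_eq0 row_free_unit; apply/negP => hU.
  set N := invmx (B - rho%:M).
  set K := \sum_i \sum_j N i j ^+ 2.
  set T := \sum_j M j j.
  have T0 : 0 <= T by apply: sumr_ge0 => j _; rewrite -phi_delta2 hpsd.
  have K0 : 0 <= K by apply: sumr_ge0 => i _; apply: sumr_ge0 => j _; rewrite sqr_ge0.
  have key : forall z, nz z <= K * T * phi M z z.
    move=> z.
    have h1 : nz (M *m z) <= T * phi M z z.
      rewrite /T mulr_suml; apply: ler_sum => j _.
      by rewrite -phi_delta -phi_delta2; apply: psd_cs.
    have hz : z = N *m ((B - rho%:M) *m z) by rewrite mulKmx.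
    have hBM : (B - rho%:M) *m z = - (M *m z) by rewrite /M -mulNmx opprB.
    have h2 : nz z <= K * nz (M *m z).
      rewrite -(nzN (M *m z)) -hBM.
      have -> : nz z = nz (N *m ((B - rho%:M) *m z)) by rewrite -hz.
      rewrite /K mulr_suml; apply: ler_sum => i _.
      rewrite mxE.
      exact: (cs_sum (fun j => N i j) (fun j => ((B - rho%:M) *m z) j 0)).
    rewrite -mulrA; apply: le_trans h2 _; exact: ler_wpM2l.
  have KT0 := mulr_ge0 K0 T0.
  have epsp : 0 < (K * T + 1)^-1 by rewrite invr_gt0; lra.
  have [e [z hz <-] he] := sup_adherent epsp hsE.
  have := key z; rewrite phi_rho hz mulr1 -/rho => h.
  rewrite -/rho in he.
  have p0 : 0 <= rho - nz (A *m z) by rewrite subr_ge0 -[rho]mulr1 -hz hray.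
  have h3 : K * T * (rho - nz (A *m z)) <= K * T * (K * T + 1)^-1.
    by apply: ler_wpM2l; [exact: mulr_ge0 | lra].
  have h4 : K * T * (K * T + 1)^-1 < 1.
    by rewrite ltr_pdivrMr ?mul1r ?ltrDl ?ltr01 //; lra.
  lra.
have ub : forall a, eigenvalue B a -> a <= rho.
  move=> a /eigenvalueP [v hv vn0].
  have hz : nz (A *m v^T) = a * nz v^T.
    rewrite !nz_tr trmx_mul !trmxK !mulmxA -(mulmxA v) -/B hv -scalemxAl mxE.
    done.
  have zp : 0 < nz v^T.
    rewrite lt_def nz_ge0 andbT; apply/eqP => /nz_eq0 /(congr1 trmx).
    by rewrite trmxK trmx0; apply/eqP.
  by rewrite -(ler_pM2r zp) -hz hray.
have lam : lambda_max B = rho.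
  apply/eqP; rewrite eq_le; apply/andP; split.
    by apply: ge_sup; [exists rho | move=> a /ub].
  apply: (sup_upper_bound _ eig); split; first by exists rho.
  by exists rho => a /ub.
by rewrite -/B lam; split.
Qed.


Lemma e_add k (X Y : 'cV[R]_k) i : (X + Y) i 0 = X i 0 + Y i 0.
Proof. by rewrite mxE. Qed.
Lemma e_sub k (X Y : 'cV[R]_k) i : (X - Y) i 0 = X i 0 - Y i 0.
Proof. by rewrite !mxE. Qed.
Lemma e_scale k (c : R) (X : 'cV[R]_k) i : (c *: X) i 0 = c * X i 0.
Proof. by rewrite mxE. Qed.

Lemma sq_le (w e : R) : 0 <= e -> w ^+ 2 <= e ^+ 2 -> w <= e.
Proof. move=> he hw; nra. Qed.

Lemma pos_ge0 (u : R) : 0 <= pos u.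
Proof. by rewrite /pos le_max lexx orbT. Qed.

Lemma pos_sq_le (u w : R) : u <= w -> pos u ^+ 2 <= w ^+ 2.
Proof.
move=> h; rewrite /pos maxEle; case: ifPn => h2; first by rewrite expr0n sqr_ge0.
rewrite -ltNge in h2; nra.
Qed.

Lemma pos_le (u e : R) : u <= e -> 0 <= e -> pos u <= e.
Proof. by move=> h1 h2; rewrite /pos ge_max h1 h2. Qed.

End H.
Lemma count_sets m beta (i : 'I_m) : (1 <= beta)%N ->
  #|[set tau : {set 'I_m} | (#|tau| == beta) && (i \in tau)]| = 'C(m.-1, beta.-1).
Proof.
move=> hb.
have -> : 'C(m.-1, beta.-1) = #|[set s : {set 'I_m} | s \subset [set~ i] & #|s| == beta.-1]|.
  by rewrite cards_draws cardsC1 card_ord.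
rewrite -[RHS](@card_in_imset _ _ (fun s => i |: s)).
  apply: eq_card => tau; rewrite !inE; apply/andP/imsetP.
    move=> [/eqP hc hi]; exists (tau :\ i); last by rewrite finset.setD1K.
    rewrite inE; apply/andP; split.
      by apply/fintype.subsetP => x; rewrite in_setD1 in_setC1 => /andP[].
    by have := cardsD1 i tau; rewrite hi hc add1n => ->.
  move=> [s]; rewrite inE => /andP[hs /eqP hc] ->.
  have his : i \notin s by apply/negP => /(fintype.subsetP hs); rewrite in_setC1 eqxx.
  by rewrite cardsU1 his hc add1n prednK // finset.setU11.
move=> s1 s2; rewrite !inE => /andP[h1 _] /andP[h2 _] e.
have n1 : i \notin s1 by apply/negP => /(fintype.subsetP h1); rewrite in_setC1 eqxx.
have n2 : i \notin s2 by apply/negP => /(fintype.subsetP h2); rewrite in_setC1 eqxx.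
by rewrite -(finset.setU1K n1) -(finset.setU1K n2) e.
Qed.

Lemma sum_swap (R : realType) m beta (g : 'I_m -> R) : (1 <= beta)%N ->
  \sum_(tau : {set 'I_m} | #|tau| == beta) \sum_(i in tau) g i =
  'C(m.-1, beta.-1)%:R * \sum_i g i.
Proof.
move=> hb.
under eq_bigr do rewrite big_mkcond /=.
rewrite exchange_big /= mulr_sumr; apply: eq_bigr => i _.
rewrite -big_mkcondr /= sumr_const -(count_sets i hb) mulr_natl.
congr (_ *+ _); apply: eq_card => tau; by rewrite !inE.
Qed.

Unset Implicit Arguments.
Set Strict Implicit.

Theorem lemma6 (R : realType) (m n : nat) (A : 'M[R]_(m, n)) (b : 'cV[R]_m)
  (beta : nat) (L : R)
  (hrows : forall i : 'I_m, enorm (row i A)^T = 1)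
  (hcons : exists x : 'cV[R]_n, polyh A b x)
  (hbeta : (1 <= beta <= m)%N)
  (hL : 0 < L)
  (hhoff : forall x : 'cV[R]_n,
      dist_set x (polyh A b) ^+ 2 <= L ^+ 2 * enorm (posv (A *m x - b)) ^+ 2) :
  let mu1 := (m%:R * L ^+ 2)^-1 in
  let mu2 := Num.min 1 (beta%:R / m%:R * lambda_max (A^T *m A)) in
  [/\ 0 < mu1, mu1 <= mu2, mu2 <= 1 &
    forall x : 'cV[R]_n,
      mu1 / 2 * dist_set x (polyh A b) ^+ 2 <= fobj beta A b x /\
      fobj beta A b x <= mu2 / 2 * dist_set x (polyh A b) ^+ 2].
Proof.
move=> mu1 mu2.
have /andP[hb1 hbm] := hbeta.
have hm : (0 < m)%N by apply: leq_trans hb1 hbm.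
have hn : (0 < n)%N.
  rewrite lt0n; apply/negP => /eqP n0.
  have := hrows (Ordinal hm); rewrite /enorm big1 ?sqrtr0.
    by move=> /esym/eqP; rewrite oner_eq0.
  move=> j _; exfalso; move: (ltn_ord j); rewrite ltnNge => /negP; apply.
  exact: (leq_trans (eq_leq n0) (leq0n _)).
have hrow1 : forall i, \sum_j A i j ^+ 2 = 1.
  move=> i; have := hrows i; move/(congr1 (fun e => e ^+ 2)).
  rewrite enorm_sq expr1n => <-; by apply: eq_bigr => j _; rewrite !mxE.
have rowcs : forall i z, ((A *m z) i 0) ^+ 2 <= nz z.
  move=> i z; rewrite mxE.
  apply: le_trans (cs_sum (fun j => A i j) (fun j => z j 0)) _.
  by rewrite hrow1 mul1r.
have nzA : forall z, nz (A *m z) <= m%:R * nz z.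
  move=> z; have : nz (A *m z) <= \sum_(i < m) nz z.
    by rewrite {1}/nz; apply: ler_sum => i _; exact: rowcs.
  by rewrite sumr_const card_ord mulr_natl.
have [lam0 hlam] := rayleigh hn nzA.
set lam := lambda_max (A^T *m A) in lam0 hlam mu2 *.
have mpos : 0 < (m%:R : R) by rewrite ltr0n.
have bpos : 0 < (beta%:R : R) by rewrite ltr0n.
have main : forall x, mu1 / 2 * dist_set x (polyh A b) ^+ 2 <= fobj beta A b x /\
      fobj beta A b x <= mu2 / 2 * dist_set x (polyh A b) ^+ 2.
  move=> x.
  set d := dist_set x (polyh A b).
  have [y0 hy0] := hcons.
  have dlb : forall v, (forall y, polyh A b y -> v <= enorm (x - y)) -> v <= d.
    move=> v hv; apply: lb_le_inf.
      by exists (enorm (x - y0)), y0.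
    by move=> _ [y hy <-]; exact: hv.
  have d0 : 0 <= d by apply: dlb => y _; exact: enorm_ge0.
  pose r := resid A b x.
  have r0 : forall i, 0 <= r i by move=> i; exact: pos_ge0.
  have rAy : forall i y, polyh A b y -> r i ^+ 2 <= ((A *m (x - y)) i 0) ^+ 2.
    move=> i y hy; rewrite /r /resid; apply: pos_sq_le.
    rewrite mulmxBr e_sub; have := hy i; lra.
  have rd : forall i, r i <= d.
    move=> i; apply: dlb => y hy; apply: sq_le; first exact: enorm_ge0.
    rewrite enorm_sq; exact: le_trans (rAy i y hy) (rowcs i (x - y)).
  set Sr := \sum_i r i ^+ 2.
  have Sr0 : 0 <= Sr by apply: sumr_ge0 => i _; exact: sqr_ge0.
  have hSr : enorm (posv (A *m x - b)) ^+ 2 = Sr.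
    by rewrite enorm_sq; apply: eq_bigr => i _; rewrite mxE e_sub.
  have hoff : d ^+ 2 <= L ^+ 2 * Sr by rewrite -hSr; exact: hhoff.
  have Sr_lam : Sr <= lam * d ^+ 2.
    have h : forall y, polyh A b y -> Sr <= lam * enorm (x - y) ^+ 2.
      move=> y hy; rewrite enorm_sq; apply: le_trans (hlam _).
      by apply: ler_sum => i _; exact: rAy.
    have [l0|lp] := eqVneq lam 0.
      by have := h y0 hy0; rewrite l0 !mul0r.
    have lpos : 0 < lam by rewrite lt_def lp lam0.
    have hv : Num.sqrt (Sr / lam) <= d.
      apply: dlb => y hy; apply: sq_le; first exact: enorm_ge0.
      rewrite sqr_sqrtr ?divr_ge0 // ler_pdivrMr // mulrC; exact: h.
    have sv := sqrtr_ge0 (Sr / lam).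
    have sq := sqr_sqrtr (divr_ge0 Sr0 lam0).
    have : Sr / lam <= d ^+ 2 by rewrite -sq; nra.
    move=> h2; have := ler_wpM2l lam0 h2.
    by rewrite [lam * (Sr / lam)]mulrC divfK ?gt_eqF.
  pose Mt (tau : {set 'I_m}) := \big[Num.max/0]_(i in tau) resid A b x i.
  have Mtr : forall (tau : {set 'I_m}) i, i \in tau -> r i <= Mt tau.
    by move=> tau i hi; exact: le_bigmax_cond.
  have Mtd : forall tau : {set 'I_m}, Mt tau <= d.
    by move=> tau; apply: bigmax_le => // i _; exact: rd.
  have Mtsq : forall tau : {set 'I_m}, 0 <= Mt tau /\ Mt tau ^+ 2 <= \sum_(i in tau) r i ^+ 2.
    move=> tau; have Sg : 0 <= \sum_(i in tau) r i ^+ 2.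
      by apply: sumr_ge0 => i _; exact: sqr_ge0.
    rewrite /Mt; elim/big_ind: _.
    - by rewrite expr0n /= lexx.
    - by move=> u v [hu1 hu2] [hv1 hv2]; rewrite maxEle; case: ifP => _; split.
    - move=> i hi; split; first exact: r0.
      rewrite (bigD1 i) //= lerDl; apply: sumr_ge0 => j _; exact: sqr_ge0.
  set Q := \sum_(tau : {set 'I_m} | #|tau| == beta) Mt tau ^+ 2.
  have hf : fobj beta A b x = ('C(m, beta)%:R)^-1 * (2^-1 * Q).
    by rewrite /fobj /Q /Mt [in RHS]mulr_sumr.
  set C := 'C(m, beta).
  set C' := 'C(m.-1, beta.-1).
  have Cpos : 0 < (C%:R : R) by rewrite ltr0n bin_gt0.
  have hbin : (m * C' = beta * C)%N by rewrite /C' /C mul_bin_diag prednK.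
  have hC' : (C'%:R : R) = beta%:R * C%:R / m%:R.
    by rewrite -natrM -hbin natrM; field; rewrite gt_eqF.
  have hsw := sum_swap (fun i => r i ^+ 2) hb1.
  rewrite -/C' -/Sr hC' in hsw.
  have low : beta%:R * C%:R / m%:R * Sr <= beta%:R * Q.
    rewrite -hsw /Q mulr_sumr; apply: ler_sum => tau /eqP htau.
    have : \sum_(i in tau) r i ^+ 2 <= \sum_(i in tau) Mt tau ^+ 2.
      apply: ler_sum => i hi; have := Mtr tau i hi; have := r0 i; nra.
    by rewrite sumr_const htau mulr_natl.
  have up1 : Q <= beta%:R * C%:R / m%:R * Sr.
    rewrite -hsw /Q; apply: ler_sum => tau _; exact: (Mtsq tau).2.
  have up2 : Q <= C%:R * d ^+ 2.
    have -> : (C%:R : R) * d ^+ 2 = \sum_(tau : {set 'I_m} | #|tau| == beta) d ^+ 2.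
      rewrite sumr_const mulr_natl; congr (_ *+ _).
      rewrite /C -[X in 'C(X, _)](card_ord m) -card_draws.
      by apply: eq_card => tau; rewrite inE.
    apply: ler_sum => tau _; have := Mtd tau; have := (Mtsq tau).1; nra.
  rewrite hf; split.
    rewrite -subr_ge0.
    have -> : C%:R^-1 * (2^-1 * Q) - mu1 / 2 * d ^+ 2 =
      (beta%:R * Q - beta%:R * C%:R / m%:R * Sr) / (2 * beta%:R * C%:R)
      + (L ^+ 2 * Sr - d ^+ 2) / (2 * m%:R * L ^+ 2).
      rewrite /mu1; field.
      by rewrite !gt_eqF.
    apply: addr_ge0; apply: divr_ge0.
    - by rewrite subr_ge0.
    - by rewrite !mulr_ge0 // ltW.
    - by rewrite subr_ge0.
    - by rewrite !mulr_ge0 // ?ltW // exprn_ge0 // ltW.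
  rewrite /mu2 minEle; case: ifP => _.
    rewrite -subr_ge0.
    have -> : 1 / 2 * d ^+ 2 - C%:R^-1 * (2^-1 * Q) = (C%:R * d ^+ 2 - Q) / (2 * C%:R).
      by field; rewrite gt_eqF.
    by apply: divr_ge0; rewrite ?subr_ge0 // mulr_ge0 // ltW.
  rewrite -subr_ge0.
  have -> : beta%:R / m%:R * lam / 2 * d ^+ 2 - C%:R^-1 * (2^-1 * Q) =
     (beta%:R * C%:R / m%:R * Sr - Q) / (2 * C%:R)
     + beta%:R * (lam * d ^+ 2 - Sr) / (2 * m%:R).
    by field; rewrite !gt_eqF.
  apply: addr_ge0; apply: divr_ge0.
  - by rewrite subr_ge0.
  - by rewrite mulr_ge0 // ltW.
  - by apply: mulr_ge0; [exact: ltW | rewrite subr_ge0].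
  - by rewrite mulr_ge0 // ltW.
have mu1p : 0 < mu1 by rewrite invr_gt0 mulr_gt0 // exprn_gt0.
have mu2le : mu2 <= 1 by rewrite /mu2 ge_min lexx.
split => //.
(* mu1 <= mu2 via a point at distance >= 1 *)
have [y0 hy0] := hcons.
pose i0 := Ordinal hm.
pose a := (row i0 A)^T.
pose t := b i0 0 - (A *m y0) i0 0 + 1.
pose x := y0 + t *: a.
have Aa : (A *m a) i0 0 = 1.
  by rewrite mxE -(hrow1 i0); apply: eq_bigr => j _; rewrite !mxE expr2.
have d1 : 1 <= dist_set x (polyh A b).
  apply: lb_le_inf; first by exists (enorm (x - y0)), y0.
  move=> _ [y hy <-].
  apply: sq_le; first exact: enorm_ge0.
  rewrite enorm_sq.
  have h1 : (A *m (x - y)) i0 0 = (A *m y0) i0 0 + t * (A *m a) i0 0 - (A *m y) i0 0.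
    by rewrite /x mulmxBr mulmxDr -scalemxAr e_sub e_add e_scale.
  have h2 : 1 <= (A *m (x - y)) i0 0 by rewrite h1 Aa /t; have := hy i0; lra.
  apply: le_trans (rowcs i0 (x - y)); rewrite expr1n; nra.
have [h1 h2] := main x.
have dp : 0 < dist_set x (polyh A b) ^+ 2 by rewrite exprn_gt0 // (lt_le_trans ltr01 d1).
have := le_trans h1 h2.
by rewrite ler_pM2r // ler_pM2r // invr_gt0.
Qed.
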